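(* If $r\ge 2$, then the glued binary tree $GT(r)$ satisfies $\mu_{\rm t}(GT(r))=\mu_{\rm d}(GT(r))=2^{r-1}$, and the number of $\mu_{\rm t}$-sets and the number of $\mu_{\rm d}$-sets of $GT(r)$ are both equal to $2^{2^{r-1}}$.
   Context: A perfect binary tree of depth $r\ge1$ is a rooted tree in which every non-leaf vertex has exactly $2$ children and all leaves have depth $r$. The glued binary tree $GT(r)$ is obtained from two copies of the perfect binary tree of depth $r$ by pairwise identifying their leaves (via a fixed isomorphism of the copies). For $S\subseteq V(G)$, two vertices $u,v$ are $S$-visible if there exists a shortest $u,v$-path $P$ with $V(P)\cap S\subseteq\{u,v\}$; $S$ is a mutual-visibility set if every two vertices of $S$ are $S$-visible. $S$ is a dual mutual-visibility set if it is a mutual-visibility set and every pair $u,v\in V(G)\setminus S$ is $S$-visible. $S$ is a total mutual-visibility set if every pair of vertices of $G$ is $S$-visible. Largest dual (resp. total) mutual-visibility sets are $\mu_{\rm d}$-sets (resp. $\mu_{\rm t}$-sets), and their sizes are $\mu_{\rm d}(G)$ (resp. $\mu_{\rm t}(G)$). *)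

(* Defs.v *)
From mathcomp Require Import all_boot.
Set Implicit Arguments. Unset Strict Implicit. Unset Printing Implicit Defensive.

Section Visibility.
Variables (T : finType) (adj : rel T).

Definition walk (u v : T) (p : seq T) : Prop := path adj u p /\ last u p = v.

(** A shortest u,v-path: a u,v-walk of minimum length (such walks are paths). *)
Definition shortest_path (u v : T) (p : seq T) : Prop :=
  walk u v p /\ forall q, walk u v q -> size p <= size q.

Definition S_visible (S : {set T}) (u v : T) : Prop :=
  exists p, shortest_path u v p /\
    forall x, x \in u :: p -> x \in S -> x = u \/ x = v.

Definition mutual_visibility_set (S : {set T}) : Prop :=
  forall u v, u \in S -> v \in S -> S_visible S u v.

Definition dual_mutual_visibility_set (S : {set T}) : Prop :=
  mutual_visibility_set S /\
  forall u v, u \notin S -> v \notin S -> S_visible S u v.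

Definition total_mutual_visibility_set (S : {set T}) : Prop :=
  forall u v, S_visible S u v.

Definition mu_d_set (S : {set T}) : Prop :=
  dual_mutual_visibility_set S /\
  forall S', dual_mutual_visibility_set S' -> #|S'| <= #|S|.

Definition mu_t_set (S : {set T}) : Prop :=
  total_mutual_visibility_set S /\
  forall S', total_mutual_visibility_set S' -> #|S'| <= #|S|.

Definition mu_d_eq (k : nat) : Prop :=
  (exists S, dual_mutual_visibility_set S /\ #|S| = k) /\
  forall S, dual_mutual_visibility_set S -> #|S| <= k.

Definition mu_t_eq (k : nat) : Prop :=
  (exists S, total_mutual_visibility_set S /\ #|S| = k) /\
  forall S, total_mutual_visibility_set S -> #|S| <= k.

Definition num_sets_eq (P : {set T} -> Prop) (k : nat) : Prop :=
  exists F : {set {set T}}, (forall S, S \in F <-> P S) /\ #|F| = k.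

End Visibility.

(** Nodes of a perfect binary tree of depth r are heap-indexed by
    1 .. 2^(r+1)-1: root 1, children of i are 2i and 2i+1, leaves are the
    indices i with 2^r <= i.  A vertex of GT(r) is a pair (c, i) with c the
    copy (false/true) and i a node index; leaves are shared by both copies,
    represented canonically with c = false. *)
Definition gt_leaf (r i : nat) : bool := 2 ^ r <= i.

Definition gt_valid (r : nat) (x : bool * 'I_(2 ^ r.+1)) : bool :=
  (0 < x.2) && (gt_leaf r x.2 ==> ~~ x.1).

Definition GTv (r : nat) := {x : bool * 'I_(2 ^ r.+1) | @gt_valid r x}.

(** Edges: parent/child pairs within a copy; an edge at a leaf connects it to
    its parent in both copies. *)
Definition gt_adj (r : nat) : rel (GTv r) := fun x y =>
  let: (c, i) := val x in let: (d, j) := val y in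
  ((i == j./2 :> nat) || (j == i./2 :> nat)) &&
  [|| c == d, gt_leaf r i | gt_leaf r j].

(* Main.v *)
Require Import Defs.
From mathcomp Require Import all_boot zify.
From Stdlib Require Import Classical.
Set Implicit Arguments. Unset Strict Implicit. Unset Printing Implicit Defensive.

Definition cp r (v : GTv r) : bool := (val v).1.
Definition ix r (v : GTv r) : nat := val (val v).2.
Definition cn r (v : GTv r) : nat := nat_of_bool (cp v).

Lemma vspec r (v : GTv r) :
  0 < ix v /\ ix v < 2 * 2 ^ r /\ cn v <= 1 /\ (2 ^ r <= ix v -> cn v = 0).
Proof.
case: v => [[c i] hv]; rewrite /ix /cn /cp /=.
move: hv; rewrite /gt_valid /gt_leaf /= => /andP[h1 h2].
have hi : (i < 2 * 2 ^ r)%N by rewrite -expnS.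
split=> //; split=> //; split; first by case: c {h2}.
by move=> hl; move: h2; rewrite hl /=; case: c.
Qed.

Lemma vext r (v w : GTv r) : cn v = cn w -> ix v = ix w -> v = w.
Proof.
case: v => [[c i] hv]; case: w => [[d j] hw]; rewrite /cn /cp /ix /= => hc hi.
apply: val_inj => /=. have -> : c = d by case: c d hc {hv hw} => [] [].
by rewrite (ord_inj hi).
Qed.

Lemma adjP r (v w : GTv r) : gt_adj v w <->
  ((ix v = (ix w)./2 \/ ix w = (ix v)./2) /\ (cn v = cn w \/ 2 ^ r <= ix v \/ 2 ^ r <= ix w)).
Proof.
case: v => [[c i] hv]; case: w => [[d j] hw]; rewrite /cn /cp /ix /gt_adj /gt_leaf /=.
split.
- case/andP=> H1 H2; split.
    by case/orP: H1 => /eqP ->; [left|right].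
  case/or3P: H2 => [/eqP->|->|->]; by [left|right; left|right; right].
- case=> H1 H2; apply/andP; split.
    by case: H1 => ->; rewrite eqxx ?orbT.
  case: H2 => [hc|[->|->]]; last 2 first; [by rewrite orbT|by rewrite !orbT|].
  by case: c d hc {hv hw H1} => [] [].
Qed.

Lemma o0_lt r : 0 < 2 ^ r.+1. Proof. by rewrite expn_gt0. Qed.
Definition o0 r : 'I_(2 ^ r.+1) := Ordinal (o0_lt r).
Arguments o0 : clear implicits.
Lemma one_lt r : 1 < 2 ^ r.+1.
Proof. by have := ltn_exp2l 0 r.+1 (isT : 1 < 2); rewrite expn0 => ->. Qed.
Lemma groot_valid r : @gt_valid r (false, Ordinal (one_lt r)).
Proof. by rewrite /gt_valid /= implybT. Qed.
Definition groot r : GTv r := exist _ (false, Ordinal (one_lt r)) (groot_valid r).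
Arguments groot : clear implicits.

Definition nv r (c : bool) (i : nat) : GTv r :=
  insubd (groot r) (c && (i < 2 ^ r), insubd (o0 r) i).
Arguments nv : clear implicits.

Lemma nv_val r c i : 0 < i < 2 * 2 ^ r ->
  val (nv r c i) = (c && (i < 2 ^ r), insubd (o0 r) i).
Proof.
case/andP=> h1 h2; rewrite /nv (@insubdK _ _ (GTv r)) // unfold_in /gt_valid /=.
rewrite (@insubdK _ _ 'I_(2 ^ r.+1)) ?expnS // h1 /= /gt_leaf.
by case: leqP => //= _; rewrite andbF.
Qed.

Lemma nv_ix r c i : 0 < i < 2 * 2 ^ r -> ix (nv r c i) = i.
Proof. move=> h; rewrite /ix nv_val //= (@insubdK _ _ 'I_(2 ^ r.+1)) //; rewrite unfold_in /= expnS; by case/andP: h. Qed.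

Lemma nv_cn r c i : 0 < i < 2 ^ r -> cn (nv r c i) = c.
Proof.
move=> h; rewrite /cn /cp nv_val /=; last by lia.
by case/andP: h => _ ->; rewrite andbT.
Qed.

Lemma cnN r (v : GTv r) : nat_of_bool (~~ cp v) = 1 - cn v.
Proof. by rewrite /cn; case: (cp v). Qed.

Lemma notvis2 (T : finType) (adj : rel T) (S : {set T}) a b :
  a <> b -> ~~ adj a b -> (exists z, adj a z /\ adj z b) ->
  (forall z, adj a z -> adj z b -> z \in S /\ z <> a /\ z <> b) ->
  ~ S_visible adj S a b.
Proof.
move=> ab nab [z0 [h1 h2]] H [p [[[pp lp] min] hin]].
have : size p <= 2 by apply: (min [:: z0; b]); split; rewrite /= ?h1 ?h2.
case: p pp lp min hin => [|z [|w [|? ?]]] //=.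
- by rewrite andbT => h lp *; move: nab; rewrite -lp h.
- move=> /and3P[h1' h2' _] lp _ hin _; subst w.
  have [zS [za zb]] := H z h1' h2'.
  by have := hin z; rewrite !inE eqxx orbT => /(_ isT zS) [].
Qed.

Lemma notvis3 (T : finType) (adj : rel T) (S : {set T}) a b :
  a <> b -> ~~ adj a b -> (forall z, adj a z -> adj z b -> False) ->
  (exists z w, [/\ adj a z, adj z w & adj w b]) ->
  (forall z w, adj a z -> adj z w -> adj w b ->
     (z \in S /\ z <> a /\ z <> b) \/ (w \in S /\ w <> a /\ w <> b)) ->
  ~ S_visible adj S a b.
Proof.
move=> ab nab n2 [z0 [w0 [h1 h2 h3]]] H [p [[[pp lp] min] hin]].
have : size p <= 3 by apply: (min [:: z0; w0; b]); split; rewrite /= ?h1 ?h2 ?h3.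
case: p pp lp min hin => [|z [|w [|u [|? ?]]]] //=.
- by rewrite andbT => h lp *; move: nab; rewrite -lp h.
- by move=> /and3P[h1' h2' _] lp; subst w; case: (n2 z).
- move=> /and4P[h1' h2' h3' _] lp _ hin _; subst u.
  case: (H z w h1' h2' h3') => [[zS [za zb]]|[wS [wa wb]]].
    by have := hin z; rewrite !inE eqxx orbT => /(_ isT zS) [].
  by have := hin w; rewrite !inE eqxx !orbT => /(_ isT wS) [].
Qed.

Lemma shortest_ex (T : finType) (adj : rel T) u v p :
  walk adj u v p -> exists q, shortest_path adj u v q.
Proof.
suff: forall n p, size p <= n -> walk adj u v p -> exists q, shortest_path adj u v q.
  by move=> H w; apply: (H (size p) p).
elim=> [|n IH] {}p hp w.
  exists p; split=> // q _; by move: hp; rewrite leqn0 => /eqP->.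
case: (classic (forall q, walk adj u v q -> size p <= size q)) => H.
  by exists p.
have [q Hq] := not_all_ex_not _ _ H; have [wq hq] := imply_to_and _ _ Hq.
apply: (IH q _ wq); lia.
Qed.

Lemma pow_facts r : 2 <= r -> 2 ^ r = 2 * 2 ^ r.-1 /\ 2 <= 2 ^ r.-1.
Proof.
case: r => [|[|r]] // _ /=; rewrite expnS; split => //.
by have := ltn_exp2l 0 r.+1 (isT : 1 < 2); rewrite expn0.
Qed.

Lemma nv_cp r c i : 0 < i < 2 ^ r -> cp (nv r c i) = c.
Proof. move=> h; have := nv_cn c h; rewrite /cn; by case: (cp _); case: c. Qed.

Lemma adj_sym r : symmetric (@gt_adj r).
Proof.
move=> x y; apply/idP/idP => /adjP [h1 h2]; apply/adjP; split; lia.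
Qed.

Lemma up_conn r (hr : 2 <= r) i (v : GTv r) : ix v = i -> connect (@gt_adj r) v (nv r (cp v) 1).
Proof.
have [hN hM] := pow_facts hr.
elim: i {-2}i (leqnn i) v => [|n IH] i hi v hv.
  have := vspec v; lia.
have [h1 _] := vspec v.
case: (ltnP 1 i) => h.
- set w := nv r (cp v) (ix v)./2.
  have hw : ix w = (ix v)./2 by rewrite nv_ix //; have := vspec v; lia.
  have hcw : cp w = cp v by rewrite nv_cp //; have := vspec v; lia.
  apply: (connect_trans (y := w)).
    apply: connect1; apply/adjP; split; first lia.
    case: (leqP (2 ^ r) (ix v)) => hl; first by right; left.
    left; rewrite /cn hcw //.
  rewrite -hcw; apply: (IH (ix w)) => //; lia.
- have E : nv r (cp v) 1 = v.
    apply: vext; last by rewrite nv_ix //; lia.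
    by rewrite nv_cn //; lia.
  by rewrite E connect0.
Qed.

Lemma all_conn r (hr : 2 <= r) (u v : GTv r) : exists p, walk (@gt_adj r) u v p.
Proof.
have [hN hM] := pow_facts hr.
have symc := sym_connect_sym (@adj_sym r).
have root_conn : forall w : GTv r, connect (@gt_adj r) w (nv r false 1).
  move=> w; apply: (connect_trans (up_conn hr (erefl (ix w)))).
  case hc: (cp w) => //.
  set v0 := nv r true (2 ^ r.-1).
  set L := nv r false (2 ^ r).
  have hv0 : ix v0 = 2 ^ r.-1 by rewrite nv_ix //; lia.
  have cv0 : cp v0 = true by rewrite nv_cp //; lia.
  have hL : ix L = 2 ^ r by rewrite nv_ix //; lia.
  apply: (connect_trans (y := v0)).
    by rewrite symc; have := up_conn hr (erefl (ix v0)); rewrite cv0.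
  apply: (connect_trans (y := L)).
    by apply: connect1; apply/adjP; split; [left; rewrite hL hv0; lia | right; right; lia].
  have := up_conn hr (erefl (ix L)).
  have -> // : cp L = false.
  by have := vspec L; rewrite /cn; case: (cp L) => //; lia.
have : connect (@gt_adj r) u v.
  by apply: (connect_trans (root_conn u)); rewrite symc.
by case/connectP => p hp hl; exists p; split.
Qed.

Lemma shortest_all r (hr : 2 <= r) (u v : GTv r) : exists p, shortest_path (@gt_adj r) u v p.
Proof. have [p hp] := all_conn hr u v; exact: shortest_ex hp. Qed.

Definition sibi (i : nat) : nat := if i %% 2 == 0 then i.+1 else i.-1.
Lemma sibi_spec i : (i %% 2 = 0 /\ sibi i = i + 1) \/ (i %% 2 = 1 /\ sibi i = i - 1).
Proof. rewrite /sibi; case: eqP => h; [left|right]; lia. Qed.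

Definition sib r (v : GTv r) : GTv r := nv r false (sibi (ix v)).

Lemma sib_ix r (hr : 2 <= r) (v : GTv r) : 2 ^ r <= ix v -> ix (sib v) = sibi (ix v).
Proof.
have [hN hM] := pow_facts hr => hl.
rewrite nv_ix //; have := vspec v; have := sibi_spec (ix v); lia.
Qed.

Lemma sib_leaf r (hr : 2 <= r) (v : GTv r) : 2 ^ r <= ix v -> 2 ^ r <= ix (sib v).
Proof.
have [hN hM] := pow_facts hr => hl.
rewrite sib_ix //; have := vspec v; have := sibi_spec (ix v); lia.
Qed.

Lemma adj_sib r (hr : 2 <= r) (a b : GTv r) : 2 ^ r <= ix a -> gt_adj a b -> gt_adj (sib a) b.
Proof.
have [hN hM] := pow_facts hr => hl /adjP [h1 h2].
have := sib_ix hr hl; have := sibi_spec (ix a); have := vspec a; have := vspec b.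
move=> *; apply/adjP; split; lia.
Qed.

Definition P1b r (S : {set GTv r}) : bool :=
  [forall v, (v \in S) ==> (2 ^ r <= ix v) && (sib v \notin S)].

Lemma total_of_P1 r (hr : 2 <= r) (S : {set GTv r}) :
  P1b S -> total_mutual_visibility_set (@gt_adj r) S.
Proof.
have [hN hM] := pow_facts hr.
move=> /forallP hS u v.
have [q [[pq lq] mq]] := shortest_all hr u v.
pose f x := if (x \in S) && (x != u) && (x != v) then sib x else x.
have fu : f u = u by rewrite /f eqxx andbF.
have fv : f v = v by rewrite /f eqxx andbF.
have leafS : forall x, x \in S -> 2 ^ r <= ix x.
  by move=> x xS; have := hS x; rewrite xS => /andP[].
have noleafadj : forall a b : GTv r, gt_adj a b -> 2 ^ r <= ix a -> 2 ^ r <= ix b -> False.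
  move=> a b /adjP [h1 _]; have := vspec a; have := vspec b; lia.
have fhomo : {homo f : x y / gt_adj x y >-> gt_adj x y}.
  move=> a b hab; rewrite /f.
  case: ifP => /= ha; case: ifP => /= hb.
  - exfalso; move: ha hb => /andP[/andP[aS _] _] /andP[/andP[bS _] _].
    exact: (noleafadj a b hab (leafS a aS) (leafS b bS)).
  - move: ha => /andP[/andP[aS _] _]; exact: adj_sib (leafS a aS) hab.
  - have asym : forall x y : GTv r, gt_adj x y = gt_adj y x := @adj_sym r.
    move: hb => /andP[/andP[bS _] _]; rewrite asym; apply: (adj_sib hr (leafS b bS)).
    by rewrite asym.
  - exact: hab.
exists (map f q); split; [split; [split|] |].
- by rewrite -{1}fu; apply: homo_path pq.
- by rewrite -{1}fu last_map lq fv.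
- by move=> q' wq'; rewrite size_map; apply: mq.
- move=> x; rewrite -{1}fu -map_cons => /mapP [y _ ->] {x}.
  rewrite /f; case: ifP => [/andP[/andP[yS yu] yv]|hy].
    by have := hS y; rewrite yS /= => /andP[_ /negP].
  move=> yS; move: hy; rewrite yS /=; case: eqP => [->|_]; first by left.
  by case: eqP => [->|]; [right|].
Qed.

Lemma neq_ix r (v w : GTv r) : ix v <> ix w -> v <> w.
Proof. by move=> h e; apply: h; rewrite e. Qed.
Lemma neq_cn r (v w : GTv r) : cn v <> cn w -> v <> w.
Proof. by move=> h e; apply: h; rewrite e. Qed.

Lemma nadjP r (v w : GTv r) :
  ~ ((ix v = (ix w)./2 \/ ix w = (ix v)./2) /\ (cn v = cn w \/ 2 ^ r <= ix v \/ 2 ^ r <= ix w)) ->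
  ~~ gt_adj v w.
Proof. by move=> h; apply/negP => /adjP. Qed.

Lemma F1 r (hr : 2 <= r) (S : {set GTv r}) (p a b : GTv r) :
  p \in S -> cn a = cn p -> cn b = cn p -> (ix a)./2 = ix p -> (ix b)./2 = ix p ->
  ix a <> ix b -> ix a < 2 ^ r -> ix b < 2 ^ r -> ~ S_visible (@gt_adj r) S a b.
Proof.
have [hN hM] := pow_facts hr.
move=> pS h1 h2 h3 h4 h5 h6 h7.
have := vspec a; have := vspec b; have := vspec p => sp sb sa.
apply: notvis2.
- exact: neq_ix.
- apply: nadjP; lia.
- by exists p; split; apply/adjP; split; lia.
- move=> z /adjP hz1 /adjP hz2; have := vspec z => sz.
  have -> : z = p by apply: vext; lia.
  split=> //; split; apply: neq_ix; lia.
Qed.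

Lemma F2 r (hr : 2 <= r) (S : {set GTv r}) (p x c : GTv r) :
  x \in S -> cn x = cn p -> (ix x)./2 = ix p -> (ix c)./2 = ix x -> ix x < 2 ^ r ->
  (ix c < 2 ^ r -> cn c = cn x) -> ~ S_visible (@gt_adj r) S p c.
Proof.
have [hN hM] := pow_facts hr.
move=> xS h1 h2 h3 h4 h5.
have := vspec x; have := vspec c; have := vspec p => sp sc sx.
apply: notvis2.
- apply: neq_ix; lia.
- apply: nadjP; lia.
- by exists x; split; apply/adjP; split; lia.
- move=> z /adjP hz1 /adjP hz2; have := vspec z => sz.
  have -> : z = x by apply: vext; lia.
  split=> //; split; apply: neq_ix; lia.
Qed.


Lemma F3 r (hr : 2 <= r) (S : {set GTv r}) (s x l : GTv r) :
  x \in S -> cn s = cn x -> (ix s)./2 = (ix x)./2 -> ix s <> ix x ->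
  2 ^ r.-1 <= ix x -> ix x < 2 ^ r -> 2 ^ r.-1 <= ix s -> ix s < 2 ^ r ->
  (ix l)./2 = ix x -> ~ S_visible (@gt_adj r) S s l.
Proof.
have [hN hM] := pow_facts hr.
move=> xS h1 h2 h3 h4 h5 h6 h7 h8.
have := vspec x; have := vspec s; have := vspec l => sl ss sx.
set y := nv r (cp x) (ix x)./2.
have iy : ix y = (ix x)./2 by rewrite nv_ix //; lia.
have cy : cn y = cn x by rewrite /cn nv_cp //; lia.
apply: notvis3.
- apply: neq_ix; lia.
- apply: nadjP; case => hi _; clear -hi h3 h8 sl ss sx h4 hN h5 h7; lia.
- move=> z /adjP [hi1 _] /adjP [hi2 _]; have := vspec z => sz.
  clear -hi1 hi2 sz h2 h3 h4 h5 h6 h7 h8 hN hM; lia.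
- by exists y; exists x; split; apply/adjP; split; lia.
- move=> z w /adjP [hi1 hc1] /adjP [hi2 hc2] /adjP [hi3 _].
  have := vspec z => sz; have := vspec w => sw.
  have iw : ix w = ix x by clear -hi3 sw sl h8 sx h4 hN; lia.
  have iz : ix z = (ix x)./2 by clear -hi1 hi2 iw h2 h3 h4 h5 h6 h7 hN hM sz; lia.
  have cz : cn z = cn x by clear -hc1 iz h1 h7 h5 hN; lia.
  right; have -> : w = x by apply: vext; clear -hc2 cz iz iw h5 hN; lia.
  split=> //; split; apply: neq_ix; lia.
Qed.


Lemma F4 r (hr : 2 <= r) (S : {set GTv r}) (a b : GTv r) :
  ix a = ix b -> cn b = 1 - cn a -> 2 ^ r.-1 <= ix a -> ix a < 2 ^ r ->
  nv r false (2 * ix a) \in S -> nv r false (2 * ix a + 1) \in S ->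
  ~ S_visible (@gt_adj r) S a b.
Proof.
have [hN hM] := pow_facts hr.
move=> h1 h2 h3 h4 l1S l2S.
have := vspec a; have := vspec b => sb sa.
set l1 := nv r false (2 * ix a).
set l2 := nv r false (2 * ix a + 1).
have i1 : ix l1 = 2 * ix a by rewrite nv_ix //; lia.
have i2 : ix l2 = 2 * ix a + 1 by rewrite nv_ix //; lia.
have := vspec l1; have := vspec l2 => s2 s1.
apply: notvis2.
- apply: neq_cn; clear -h2 sa; lia.
- apply: nadjP; case=> hi _; clear -hi h1 sa; lia.
- exists l1; split; apply/adjP; split; try (right; right; lia); lia.
- move=> z /adjP [hi1 hc1] /adjP [hi2 hc2]; have := vspec z => sz.
  have H : ix z = (ix a)./2 \/ ix z = 2 * ix a \/ ix z = 2 * ix a + 1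
    by clear -hi1 sz sa h3 h4 hN; lia.
  case: H => [e|[e|e]].
  + exfalso; clear -hc1 hc2 e h1 h2 sa sz h4 hN; lia.
  + have -> : z = l1 by apply: vext; [clear -e s1 sz i1 h3 h4 hN; lia | lia].
    split=> //; split; apply: neq_ix; lia.
  + have -> : z = l2 by apply: vext; [clear -e s2 sz i2 h3 h4 hN; lia | lia].
    split=> //; split; apply: neq_ix; lia.
Qed.

Lemma F5 r (hr : 2 <= r) (S : {set GTv r}) (y x x' : GTv r) :
  x \in S -> cn x = cn y -> (ix x)./2 = ix y -> 2 ^ r.-1 <= ix x -> ix x < 2 ^ r ->
  ix x' = ix x -> cn x' = 1 - cn x -> ~ S_visible (@gt_adj r) S y x'.
Proof.
have [hN hM] := pow_facts hr.
move=> xS h1 h2 h3 h4 h5 h6.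
have := vspec x; have := vspec y; have := vspec x' => sx' sy sx.
set l := nv r false (2 * ix x).
have il : ix l = 2 * ix x by rewrite nv_ix //; lia.
have := vspec l => sl.
apply: notvis3.
- apply: neq_ix; clear -h2 h5 sx; lia.
- apply: nadjP; clear -h1 h2 h4 h5 h6 sx sy sx' hN; lia.
- move=> z /adjP [hi1 _] /adjP [hi2 _]; have := vspec z => sz.
  clear -hi1 hi2 sz h2 h3 h4 h5 hN hM; lia.
- exists x; exists l; split; apply/adjP; split; try (right; right; lia); lia.
- move=> z w /adjP [hi1 hc1] /adjP [hi2 hc2] /adjP [hi3 hc3].
  have := vspec z => sz; have := vspec w => sw.
  have H : ix z = ix x \/ (ix w = ix y /\ ix z < 2 ^ r)
    by clear -hi1 hi2 hi3 h2 h3 h4 h5 hN hM sz sw sx; lia.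
  case: H => [e|[e1 e2]].
  + left; have -> : z = x by apply: vext; clear -hc1 e h1 h2 h5 hN sx sy sz; lia.
    split=> //; split; [apply: neq_ix; clear -h2 sx | apply: neq_cn; clear -h6 sx]; lia.
  + exfalso; clear -hc1 hc2 hc3 e1 e2 h1 h2 h5 h6 sx sy sz sw sx' hN; lia.
Qed.


Lemma pow_even r : 2 <= r -> 2 ^ r.-1 = 2 * 2 ^ r.-2.
Proof. by case: r => [|[|r]] // _; rewrite /= expnS. Qed.

Lemma nv_leaf r c i : 2 ^ r <= i -> nv r c i = nv r false i.
Proof. by move=> h; rewrite /nv ltnNge h andbF. Qed.

Lemma nv_cnx r (x : GTv r) i : 0 < i < 2 ^ r -> cn (nv r (cp x) i) = cn x.
Proof. by move=> h; rewrite /cn nv_cp. Qed.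

Lemma nv_cnN r (x : GTv r) i : 0 < i < 2 ^ r -> cn (nv r (~~ cp x) i) = 1 - cn x.
Proof. by move=> h; rewrite /cn nv_cp //; case: (cp x). Qed.

Lemma sep r (S : {set GTv r}) : dual_mutual_visibility_set (@gt_adj r) S ->
  forall a b, ~ S_visible (@gt_adj r) S a b -> (a \in S) = ~~ (b \in S).
Proof.
move=> [mv dv] a b nvis; case aS: (a \in S); case bS: (b \in S) => //=; exfalso; apply: nvis.
  exact: mv.
by apply: dv; rewrite ?aS ?bS.
Qed.

Lemma dual_int r (hr : 2 <= r) (S : {set GTv r}) x :
  dual_mutual_visibility_set (@gt_adj r) S -> x \in S -> 2 <= ix x -> ix x < 2 ^ r -> False.
Proof.
have [hN hM] := pow_facts hr; have hMe := pow_even hr.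
move=> dS xS h2 hx.
have sx := vspec x.
have sp := sep dS.
set k := ix x.
set y := nv r (cp x) k./2.
have iy : ix y = k./2 by rewrite nv_ix //; lia.
have cy : cn y = cn x by rewrite nv_cnx //; lia.
set c1 := nv r (cp x) (2 * k).
set c2 := nv r (cp x) (2 * k + 1).
have i1 : ix c1 = 2 * k by rewrite nv_ix //; lia.
have i2 : ix c2 = 2 * k + 1 by rewrite nv_ix //; lia.
have cc1 : ix c1 < 2 ^ r -> cn c1 = cn x by rewrite i1 => h; rewrite nv_cnx //; lia.
have cc2 : ix c2 < 2 ^ r -> cn c2 = cn x by rewrite i2 => h; rewrite nv_cnx //; lia.
have e1 : (y \in S) = ~~ (c1 \in S).
  apply: sp; apply: (F2 hr xS) => //; lia.
have e2 : (y \in S) = ~~ (c2 \in S).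
  apply: sp; apply: (F2 hr xS) => //; lia.
case: (ltnP k (2 ^ r.-1)) => hk.
- have e3 : (c1 \in S) = ~~ (c2 \in S).
    apply: sp; apply: (F1 hr xS); try (apply: cc1 || apply: cc2); lia.
  by move: e1 e2 e3; case: (y \in S); case: (c1 \in S); case: (c2 \in S).
- set s := nv r (cp x) (sibi k).
  have hs := sibi_spec k.
  have is_ : ix s = sibi k by rewrite nv_ix //; lia.
  have cs : cn s = cn x by rewrite nv_cnx //; lia.
  set x' := nv r (~~ cp x) k.
  have ix' : ix x' = k by rewrite nv_ix //; lia.
  have cx' : cn x' = 1 - cn x by rewrite nv_cnN //; lia.
  case yS: (y \in S).
  + have c1S : c1 \notin S by move: e1; rewrite yS; case: (c1 \in S).
    case sS: (s \in S).
    * have : (x \in S) = ~~ (s \in S).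
        apply: sp; apply: (F1 hr yS); lia.
      by rewrite xS sS.
    * have : (s \in S) = ~~ (c1 \in S).
        apply: sp; apply: (F3 hr xS); lia.
      by rewrite sS (negbTE c1S).
  + have c1S : c1 \in S by move: e1; rewrite yS; case: (c1 \in S).
    have c2S : c2 \in S by move: e2; rewrite yS; case: (c2 \in S).
    case x'S: (x' \in S).
    * have : (x \in S) = ~~ (x' \in S).
        apply: sp; apply: (F4 hr); try lia.
          by rewrite -(nv_leaf (cp x)) //; lia.
        by rewrite -(nv_leaf (cp x)) //; lia.
      by rewrite xS x'S.
    * have : (y \in S) = ~~ (x' \in S).
        apply: sp; apply: (F5 hr xS); lia.
      by rewrite yS x'S.
Qed.


Lemma dual_leafS r (hr : 2 <= r) (S : {set GTv r}) x :
  dual_mutual_visibility_set (@gt_adj r) S -> x \in S -> 2 ^ r <= ix x.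
Proof.
have [hN hM] := pow_facts hr.
move=> dS xS; have sx := vspec x.
case: (leqP (2 ^ r) (ix x)) => // hx; exfalso.
case: (ltnP 1 (ix x)) => h2; first exact: (dual_int hr dS xS h2 hx).
have sp := sep dS.
set c1 := nv r (cp x) 2.
set c2 := nv r (cp x) 3.
have i1 : ix c1 = 2 by rewrite nv_ix //; lia.
have i2 : ix c2 = 3 by rewrite nv_ix //; lia.
have cc1 : cn c1 = cn x by rewrite nv_cnx //; lia.
have cc2 : cn c2 = cn x by rewrite nv_cnx //; lia.
have e3 : (c1 \in S) = ~~ (c2 \in S).
  apply: sp; apply: (F1 hr xS); lia.
case c1S: (c1 \in S).
  by apply: (dual_int hr dS c1S); lia.
have c2S : c2 \in S by move: e3; rewrite c1S; case: (c2 \in S).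
by apply: (dual_int hr dS c2S); lia.
Qed.

Lemma dual_P1 r (hr : 2 <= r) (S : {set GTv r}) :
  dual_mutual_visibility_set (@gt_adj r) S -> P1b S.
Proof.
have [hN hM] := pow_facts hr; have hMe := pow_even hr.
move=> dS; apply/forallP => v; apply/implyP => vS.
have lv := dual_leafS hr dS vS; rewrite lv /=.
apply/negP => sS.
have sp := sep dS.
have sv := vspec v.
set k := (ix v)./2.
set a := nv r false k.
set b := nv r true k.
have ia : ix a = k by rewrite nv_ix //; lia.
have ib : ix b = k by rewrite nv_ix //; lia.
have ca : cn a = 0 by rewrite /cn nv_cp //; lia.
have cb : cn b = 1 by rewrite /cn nv_cp //; lia.
have aS : a \notin S by apply/negP => /(dual_leafS hr dS); lia.
have bS : b \notin S by apply/negP => /(dual_leafS hr dS); lia.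
have hs := sibi_spec (ix v).
have vE : v = nv r false (ix v).
  apply: vext; last by rewrite nv_ix //; lia.
  case: (sv) => _ [_ [_ ->]] //.
  rewrite /cn /cp nv_val /= //; lia.
have sE : sib v = nv r false (sibi (ix v)) by [].
have : (a \in S) = ~~ (b \in S).
  apply: sp; apply: (F4 hr); rewrite ?ia ?ib ?ca ?cb //; try lia.
  + case: hs => [[h1 h2]|[h1 h2]].
      by rewrite vE in vS; move: vS; have -> : 2 * k = ix v by lia.
    by move: sS; rewrite sE h2; have -> : 2 * k = ix v - 1 by lia.
  + case: hs => [[h1 h2]|[h1 h2]].
      by move: sS; rewrite sE h2; have -> : 2 * k + 1 = ix v + 1 by lia.
    by rewrite vE in vS; move: vS; have -> : 2 * k + 1 = ix v by lia.
by rewrite (negbTE aS) (negbTE bS).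
Qed.


Definition gA r (A : {set 'I_(2 ^ r.-1)}) : {set GTv r} :=
  [set v | (2 ^ r <= ix v) &&
     ((ix v %% 2 == 1) == [exists a in A, val a == (ix v - 2 ^ r)./2])].

Definition lv r (j : nat) (b : bool) : GTv r := nv r false (2 ^ r + 2 * j + b).

Lemma ex_ord n (A : {set 'I_n}) (J : 'I_n) j : val J = j ->
  [exists a in A, val a == j] = (J \in A).
Proof.
move=> <-; apply/existsP/idP => [[a /andP[aA /eqP e]]|JA].
  by rewrite -(val_inj e).
by exists J; rewrite JA eqxx.
Qed.

Lemma lv_ix r (hr : 2 <= r) (j : 'I_(2 ^ r.-1)) b : ix (lv r j b) = 2 ^ r + 2 * j + b.
Proof.
have [hN hM] := pow_facts hr; have hj := ltn_ord j.
rewrite /lv nv_ix //; case: b => /=; lia.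
Qed.

Lemma lv_cn r (hr : 2 <= r) (j : 'I_(2 ^ r.-1)) b : cn (lv r j b) = 0.
Proof.
have [hN hM] := pow_facts hr.
have := vspec (lv r j b); rewrite lv_ix //; lia.
Qed.

Lemma mem_lv r (hr : 2 <= r) A (j : 'I_(2 ^ r.-1)) b : (lv r j b \in gA A) = (b == (j \in A)).
Proof.
have [hN hM] := pow_facts hr.
rewrite inE lv_ix // (ex_ord A (J := j)); last by case: b => /=; lia.
have -> : 2 ^ r <= 2 ^ r + 2 * j + b by lia.
by case: b; rewrite /=; [have -> : (2 ^ r + 2 * j + 1) %% 2 == 1 by (apply/eqP; lia)
                     | have -> : (2 ^ r + 2 * j + 0) %% 2 == 1 = false by (apply/eqP; lia)].
Qed.

Lemma leaf_lv r (hr : 2 <= r) (v : GTv r) : 2 ^ r <= ix v ->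
  exists (j : 'I_(2 ^ r.-1)), v = lv r j (ix v %% 2 == 1) /\ nat_of_ord j = (ix v - 2 ^ r)./2.
Proof.
have [hN hM] := pow_facts hr; have hv := vspec v => hl.
have hj : (ix v - 2 ^ r)./2 < 2 ^ r.-1 by lia.
exists (Ordinal hj); split => //.
apply: vext; first by rewrite lv_cn //; lia.
rewrite lv_ix //=; case: eqP => /= h; lia.
Qed.

Lemma gA_P1 r (hr : 2 <= r) (A : {set 'I_(2 ^ r.-1)}) : P1b (@gA r A).
Proof.
have [hN hM] := pow_facts hr; have hMe := pow_even hr.
apply/forallP => v; apply/implyP; rewrite inE => /andP[lv_ hp]; rewrite lv_ /=.
have sv := vspec v.
have hs := sibi_spec (ix v).
rewrite inE sib_ix // (_ : (sibi (ix v) - 2 ^ r)./2 = (ix v - 2 ^ r)./2); last by lia.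
move: hp; case: (ix v %% 2 == 1) / eqP => h1; case: (sibi (ix v) %% 2 == 1) / eqP => h2 //=;
  try (exfalso; lia).
all: by move/eqP <-; rewrite /= andbF.
Qed.

Lemma gA_card r (hr : 2 <= r) (A : {set 'I_(2 ^ r.-1)}) : #|@gA r A| = 2 ^ r.-1.
Proof.
have [hN hM] := pow_facts hr.
have -> : @gA r A = (fun j : 'I_(2 ^ r.-1) => lv r j (j \in A)) @: [set: 'I_(2 ^ r.-1)].
  apply/setP => v; apply/idP/imsetP.
  - move=> vA; have := vA; rewrite inE => /andP[hl hp].
    have [j [vE jE]] := leaf_lv hr hl.
    exists j; rewrite ?inE //.
    move: hp; rewrite (ex_ord A (J := j)) // => /eqP hp.
    by rewrite -hp.
  - by case=> j _ ->; rewrite mem_lv.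
rewrite card_imset ?cardsT ?card_ord //.
move=> j1 j2 e; apply: val_inj; have := f_equal (@ix r) e; rewrite !lv_ix //.
by case: (j1 \in A); case: (j2 \in A) => /=; lia.
Qed.

Lemma gA_inj r (hr : 2 <= r) : injective (@gA r).
Proof.
move=> A B e; apply/setP => j.
by have := mem_lv hr A j true; rewrite e mem_lv // => /esym; rewrite !eqxx; case: (j \in A); case: (j \in B).
Qed.

Lemma P1_sub r (hr : 2 <= r) (S : {set GTv r}) : P1b S -> S \subset gA [set j : 'I_(2 ^ r.-1) | lv r j true \in S].
Proof.
have [hN hM] := pow_facts hr; have hMe := pow_even hr.
move=> /forallP hS; apply/subsetP => v vS.
have /andP[hl sS] := implyP (hS v) vS.
have [j [vE jE]] := leaf_lv hr hl.
rewrite vE mem_lv // inE.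
case: eqP vE => h vE; first by rewrite -vE vS.
suff <- : sib v = lv r j true by rewrite (negbTE sS).
have hs := sibi_spec (ix v); have sv := vspec v.
apply: vext; first by rewrite lv_cn //; have := vspec (sib v); rewrite sib_ix //; lia.
rewrite lv_ix // sib_ix //=; lia.
Qed.


Lemma tot_dual r (S : {set GTv r}) :
  total_mutual_visibility_set (@gt_adj r) S -> dual_mutual_visibility_set (@gt_adj r) S.
Proof. by move=> h; split=> u v *; apply: h. Qed.

Lemma boundD r (hr : 2 <= r) (S : {set GTv r}) :
  dual_mutual_visibility_set (@gt_adj r) S -> #|S| <= 2 ^ r.-1.
Proof.
move=> dS; have := P1_sub hr (dual_P1 hr dS) => /subset_leq_card.
by rewrite gA_card.
Qed.

Lemma exT r (hr : 2 <= r) (A : {set 'I_(2 ^ r.-1)}) :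
  total_mutual_visibility_set (@gt_adj r) (@gA r A) /\ #|@gA r A| = 2 ^ r.-1.
Proof. split; [apply: (total_of_P1 hr); exact: gA_P1 | exact: gA_card]. Qed.

Lemma charD r (hr : 2 <= r) (S : {set GTv r}) :
  mu_d_set (@gt_adj r) S <-> exists A : {set 'I_(2 ^ r.-1)}, S = gA A.
Proof.
split.
- case=> dS mx.
  set A := [set j : 'I_(2 ^ r.-1) | lv r j true \in S].
  exists A; apply/eqP; rewrite eqEcard P1_sub ?dual_P1 //= gA_card //.
  have [t c] := exT hr set0; rewrite -c; apply: mx; exact: tot_dual.
- case=> A ->; have [t c] := exT hr A; split; first exact: tot_dual.
  by move=> S' dS'; rewrite c; apply: boundD.
Qed.

Lemma charT r (hr : 2 <= r) (S : {set GTv r}) :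
  mu_t_set (@gt_adj r) S <-> exists A : {set 'I_(2 ^ r.-1)}, S = gA A.
Proof.
split.
- case=> tS mx.
  set A := [set j : 'I_(2 ^ r.-1) | lv r j true \in S].
  have sub : S \subset gA A by apply: P1_sub => //; apply: dual_P1 => //; apply: tot_dual.
  exists A; apply/eqP; rewrite eqEcard sub /= gA_card //.
  have [t c] := exT hr set0; rewrite -c; exact: mx.
- case=> A ->; have [t c] := exT hr A; split; first exact: t.
  by move=> S' tS'; rewrite c; apply: boundD => //; apply: tot_dual.
Qed.

Lemma countF r (hr : 2 <= r) (P : {set GTv r} -> Prop) :
  (forall S, P S <-> exists A : {set 'I_(2 ^ r.-1)}, S = gA A) ->
  num_sets_eq P (2 ^ (2 ^ r.-1)).
Proof.
move=> hP; exists ((@gA r) @: [set: {set 'I_(2 ^ r.-1)}]); split.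
  move=> S; rewrite hP; split.
    by case/imsetP => A _ ->; exists A.
  by case=> A ->; apply: imset_f; rewrite inE.
rewrite card_imset; last exact: gA_inj.
by rewrite -powersetT card_powerset cardsT card_ord.
Qed.

Unset Implicit Arguments.

Theorem mainTheorem5 (r : nat) (hr : 2 <= r) :
  mu_t_eq (@gt_adj r) (2 ^ r.-1) /\ mu_d_eq (@gt_adj r) (2 ^ r.-1) /\
  num_sets_eq (mu_t_set (@gt_adj r)) (2 ^ (2 ^ r.-1)) /\
  num_sets_eq (mu_d_set (@gt_adj r)) (2 ^ (2 ^ r.-1)).
Proof.
have [t c] := exT hr set0.
split; [|split; [|split]].
- split; first by exists (@gA r set0).
  by move=> S tS; apply: boundD => //; apply: tot_dual.
- split; first by exists (@gA r set0); split => //; apply: tot_dual.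
  by move=> S dS; apply: boundD.
- by apply: (countF hr) => S; apply: charT.
- by apply: (countF hr) => S; apply: charD.
Qed.
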